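(* Let $p\ge\frac{3(2+\sqrt2)}{8}$. Then for all $r\in(0,1)$, $$\frac{K(1/2)}{2^{p-1}}\le r^pK(1-r)+(1-r)^pK(r)<\frac\pi2 .$$ For $p\in\big[\frac{3(2-\sqrt2)}{8},1\big]$ the inequalities are reversed: $\frac\pi2< r^pK(1-r)+(1-r)^pK(r)\le \frac{K(1/2)}{2^{p-1}}$ for all $r\in(0,1)$. Here $K(1/2)=\frac{\pi\sqrt\pi}{2\Gamma(3/4)^2}$.
   Context: $K(x)={\cal K}(\sqrt x)=\frac\pi2\,{}_2F_1(1/2,1/2;1;x)$ for $x\in[0,1)$, where ${\cal K}(r)=\int_0^{\pi/2}(1-r^2\sin^2t)^{-1/2}dt$ is the complete elliptic integral of the first kind. *)

(* Defs.v *)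
From Stdlib Require Import Reals.
From Coquelicot Require Import Coquelicot.
Open Scope R_scope.

Definition calK (r : R) : R :=
  RInt (fun t => / sqrt (1 - r ^ 2 * (sin t) ^ 2)) 0 (PI / 2).

Definition K (x : R) : R := calK (sqrt x).

Definition Fp (p r : R) : R :=
  Rpower r p * K (1 - r) + Rpower (1 - r) p * K r.

(* Main.v *)
Require Import Defs.
From Stdlib Require Import Reals Lra Lia.
From Coquelicot Require Import Coquelicot.
Open Scope R_scope.


Fixpoint bc (n : nat) : R :=
  match n with O => 1 | S m => bc m * ((2 * INR m + 1) / (2 * INR m + 2)) end.
Definition ac (n : nat) : R := bc n ^ 2.

Lemma bc_pos n : 0 < bc n.
Proof.
  induction n; simpl. lra.
  apply Rmult_lt_0_compat; auto.
  pose proof (pos_INR n). apply Rdiv_lt_0_compat; lra.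
Qed.

Lemma bc_le1 n : bc n <= 1.
Proof.
  induction n; simpl. lra.
  pose proof (pos_INR n). pose proof (bc_pos n).
  assert ((2 * INR n + 1) / (2 * INR n + 2) <= 1).
  { apply Rmult_le_reg_r with (2 * INR n + 2). lra.
    unfold Rdiv; rewrite Rmult_assoc, Rinv_l; lra. }
  assert (0 <= (2 * INR n + 1) / (2 * INR n + 2)) by (apply Rle_ge in H; apply Rdiv_le_0_compat; lra).
  nra.
Qed.

Lemma ac_pos n : 0 < ac n.
Proof. unfold ac. pose proof (bc_pos n). nra. Qed.

Lemma ac_le_bc n : ac n <= bc n.
Proof. unfold ac. pose proof (bc_pos n). pose proof (bc_le1 n). nra. Qed.

Lemma rad_ge1 (a : nat -> R) : (forall n, Rabs (a n) <= 1) -> Rbar_le 1 (CV_radius a).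
Proof.
  intros H. destruct (CV_radius_bounded a) as [Hub _]. apply Hub.
  exists 1. intro n. rewrite pow1, Rmult_1_r. auto.
Qed.

Lemma in_rad (a : nat -> R) x : (forall n, Rabs (a n) <= 1) -> Rabs x < 1 ->
  Rbar_lt (Rabs x) (CV_radius a).
Proof.
  intros H Hx. eapply Rbar_lt_le_trans with (y := Finite 1). simpl. auto.
  apply rad_ge1; auto.
Qed.

Lemma bc_abs n : Rabs (bc n) <= 1.
Proof. rewrite Rabs_pos_eq. apply bc_le1. left; apply bc_pos. Qed.
Lemma ac_abs n : Rabs (ac n) <= 1.
Proof. rewrite Rabs_pos_eq. eapply Rle_trans. apply ac_le_bc. apply bc_le1. left; apply ac_pos. Qed.

Lemma isp_lin (a b : nat -> R) x la lb u v :
  is_pseries a x la -> is_pseries b x lb ->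
  is_pseries (fun n => u * a n + v * b n) x (u * la + v * lb).
Proof.
  intros Ha Hb.
  apply is_pseries_ext with (PS_plus (PS_scal u a) (PS_scal v b)).
  intros; reflexivity.
  assert (Hu := is_pseries_scal (K:=R_AbsRing) (V:=R_NormedModule) u a x la (Rmult_comm _ _) Ha).
  assert (Hv := is_pseries_scal (K:=R_AbsRing) (V:=R_NormedModule) v b x lb (Rmult_comm _ _) Hb).
  exact (is_pseries_plus (K:=R_AbsRing) (V:=R_NormedModule) _ _ x _ _ Hu Hv).
Qed.

Lemma isp_incr (a : nat -> R) x l : is_pseries a x l ->
  is_pseries (fun n => match n with O => 0 | S m => a m end) x (x * l).
Proof.
  intros H. apply is_pseries_ext with (PS_incr_1 a). intros [|n]; reflexivity.
  exact (is_pseries_incr_1 (K:=R_AbsRing) (V:=R_NormedModule) a x l H).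
Qed.

Lemma isp_PS (a : nat -> R) x : (forall n, Rabs (a n) <= 1) -> Rabs x < 1 ->
  is_pseries a x (PSeries a x).
Proof.
  intros H Hx. apply PSeries_correct. apply CV_radius_inside.
  apply in_rad; auto.
Qed.

Ltac Rgoal := match goal with |- ?a = ?b => change (@eq R a b) end.
Lemma scalR (a b : R) : scal a b = a * b.
Proof. reflexivity. Qed.
Lemma plusR (a b : R) : plus a b = a + b.
Proof. reflexivity. Qed.
Lemma minusR (a b : R) : minus a b = a - b.
Proof. reflexivity. Qed.


Lemma bc_S n : bc (S n) = bc n * ((2 * INR n + 1) / (2 * INR n + 2)).
Proof. reflexivity. Qed.

Lemma is_derive_val (f : R -> R) x l l' : is_derive f x l -> l = l' -> is_derive f x l'.
Proof. intros H <-. exact H. Qed.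

Lemma derive_cont_pt (f : R -> R) x l : is_derive f x l -> continuity_pt f x.
Proof.
  intros H. apply continuity_pt_filterlim.
  apply (ex_derive_continuous (K:=R_AbsRing) (V:=R_NormedModule)). exists l. exact H.
Qed.

Lemma bc_ode x : Rabs x < 1 ->
  2 * (1 - x) * PSeries (PS_derive bc) x - PSeries bc x = 0.
Proof.
  intros Hx.
  assert (Hd : forall n, Rabs (PS_derive bc n) <= 1 \/ True) by auto.
  assert (H1 : is_pseries (PS_derive bc) x (PSeries (PS_derive bc) x)).
  { apply PSeries_correct. apply CV_radius_inside. rewrite CV_radius_derive.
    apply in_rad; auto. apply bc_abs. }
  assert (H0 := isp_PS bc x bc_abs Hx).
  assert (H2 := isp_incr _ _ _ H1).
  assert (H3 := isp_lin _ _ _ _ _ 2 (-2) H1 H2).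
  assert (H4 := isp_lin _ _ _ _ _ 1 (-1) H3 H0).
  apply is_pseries_ext with (b := fun _ => 0) in H4.
  - apply is_pseries_unique in H4. rewrite PSeries_const_0 in H4. lra.
  - intros [|n]; unfold PS_derive.
    + simpl. match goal with |- ?a = ?b => change (@eq R a b) end. field.
    + rewrite !bc_S. rewrite !S_INR. pose proof (pos_INR n). match goal with |- ?a = ?b => change (@eq R a b) end. field. lra.
Qed.

Lemma sqrt_series x : Rabs x < 1 -> sqrt (1 - x) * PSeries bc x = 1.
Proof.
  intros Hx.
  set (h := fun y => sqrt (1 - y) * PSeries bc y).
  assert (Hder : forall y, Rabs y < 1 -> is_derive h y 0).
  { intros y Hy. apply Rabs_def2 in Hy.
    assert (Hs : is_derive (fun y => sqrt (1 - y)) y (-1 / (2 * sqrt (1 - y)))).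
    { auto_derive. lra. replace (1 + - y) with (1 - y) by ring. unfold Rdiv. ring. }
    assert (HP := is_derive_PSeries bc y (in_rad bc y bc_abs ltac:(apply Rabs_def1; lra))).
    assert (Hm := is_derive_mult _ _ _ _ _ Hs HP Rmult_comm).
    unfold h. eapply is_derive_val. exact Hm. assert (Ho := bc_ode y ltac:(apply Rabs_def1; lra)).
    assert (0 < sqrt (1 - y)) by (apply sqrt_lt_R0; lra).
    assert (sqrt (1 - y) * sqrt (1 - y) = 1 - y) by (apply sqrt_sqrt; lra).
    unfold plus, mult; simpl.
    apply Rmult_eq_reg_l with (2 * sqrt (1 - y)). 2: lra.
    field_simplify. 2: lra. nra. }
  assert (HM := MVT_gen h 0 x (fun _ => 0)).
  destruct HM as [c [Hc He]].
  - intros y Hy. apply Hder. apply Rabs_def2 in Hx.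
    apply Rabs_def1; unfold Rmin, Rmax in Hy; destruct (Rle_dec 0 x); lra.
  - intros y Hy. apply derive_cont_pt with 0. apply Hder. apply Rabs_def2 in Hx.
    apply Rabs_def1; unfold Rmin, Rmax in Hy; destruct (Rle_dec 0 x); lra.
  - assert (h 0 = 1). { unfold h. rewrite PSeries_0. simpl. rewrite Rminus_0_r, sqrt_1. ring. }
    unfold h in *. lra.
Qed.

Lemma inv_sqrt_series x : Rabs x < 1 -> / sqrt (1 - x) = PSeries bc x.
Proof.
  intros Hx. pose proof (sqrt_series x Hx).
  apply Rabs_def2 in Hx. assert (0 < sqrt (1 - x)) by (apply sqrt_lt_R0; lra).
  apply Rmult_eq_reg_l with (sqrt (1 - x)). rewrite H. field. lra. lra.
Qed.


Definition W (n : nat) : R := RInt (fun t => sin t ^ (2 * n)) 0 (PI / 2).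

Lemma sinpow_cont k x : continuous (fun t => sin t ^ k) x.
Proof. apply (ex_derive_continuous (K:=R_AbsRing) (V:=R_NormedModule)). auto_derive. auto. Qed.

Lemma ex_RInt_sinpow k a b : ex_RInt (fun t => sin t ^ k) a b.
Proof. apply (ex_RInt_continuous (V:=R_CompleteNormedModule)). intros; apply sinpow_cont. Qed.

Lemma W_rec n : (2 * INR n + 2) * W (S n) = (2 * INR n + 1) * W n.
Proof.
  set (f := fun t => sin t ^ (2 * n + 1) * cos t).
  set (df := fun t => (2 * INR n + 1) * sin t ^ (2 * n) - (2 * INR n + 2) * sin t ^ (2 * S n)).
  assert (H : is_RInt df 0 (PI / 2) (minus (f (PI / 2)) (f 0))).
  { apply (is_RInt_derive (V:=R_CompleteNormedModule)).
    - intros x _. unfold f, df. auto_derive. auto.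
      replace (n + (n + 0) + 1)%nat with (S (2 * n)) by lia.
      replace (2 * n + 1)%nat with (S (2 * n)) by lia.
      change (Init.Nat.pred (S (2 * n))) with (2 * n)%nat.
      rewrite S_INR, mult_INR.
      change (sin x ^ S (2 * n)) with (sin x * sin x ^ (2 * n)).
      change (sin x ^ S (S (2 * n))) with (sin x * (sin x * sin x ^ (2 * n))).
      change (INR 2) with 2.
      pose proof (sin2_cos2 x). unfold Rsqr in H.
      replace (cos x * cos x) with (1 - sin x * sin x) by lra.
      replace (1 * cos x * ((2 * INR n + 1) * sin x ^ (2 * n)) * cos x) with
        ((2 * INR n + 1) * sin x ^ (2 * n) * (cos x * cos x)) by ring.
      replace (cos x * cos x) with (1 - sin x * sin x) by lra. replace (2 * S n)%nat with (S (S (2 * n))) by lia. change (sin x ^ S (S (2 * n))) with (sin x * (sin x * sin x ^ (2 * n))). ring.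
    - intros x _. unfold df. apply (ex_derive_continuous (K:=R_AbsRing) (V:=R_NormedModule)).
      auto_derive. auto. }
  assert (Hf : minus (f (PI / 2)) (f 0) = 0).
  { unfold f, minus, plus, opp; simpl. rewrite cos_PI2, sin_0. rewrite pow_i by lia. Rgoal. ring. }
  rewrite Hf in H.
  assert (H1 := (RInt_correct (V:=R_CompleteNormedModule)) _ _ _ (ex_RInt_sinpow (2 * n) 0 (PI / 2))).
  assert (H2 := (RInt_correct (V:=R_CompleteNormedModule)) _ _ _ (ex_RInt_sinpow (2 * S n) 0 (PI / 2))).
  assert (H3 := (is_RInt_minus (V:=R_CompleteNormedModule)) _ _ _ _ _ _ ((is_RInt_scal (V:=R_CompleteNormedModule)) _ _ _ (2 * INR n + 1) _ H1)
                                          ((is_RInt_scal (V:=R_CompleteNormedModule)) _ _ _ (2 * INR n + 2) _ H2)).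
  apply (is_RInt_unique (V:=R_CompleteNormedModule)) in H. apply (is_RInt_unique (V:=R_CompleteNormedModule)) in H3.
  unfold df in H. unfold W.
  assert (E : RInt (fun x : R => minus (scal (2 * INR n + 1) (sin x ^ (2 * n)))
              (scal (2 * INR n + 2) (sin x ^ (2 * S n)))) 0 (PI / 2) = 0).
  { etransitivity. 2: exact H. apply (RInt_ext (V:=R_CompleteNormedModule)). intros; reflexivity. }
  assert (Z := eq_trans (eq_sym H3) E).
  assert (Z' : (2 * INR n + 1) * W n + - ((2 * INR n + 2) * W (S n)) = 0) by exact Z.
  unfold W in Z'. lra.
Qed.

Lemma W_val n : W n = PI / 2 * bc n.
Proof.
  induction n.
  - unfold W. simpl. rewrite RInt_const. unfold scal; simpl; unfold mult; simpl. ring.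
  - pose proof (W_rec n). pose proof (pos_INR n). rewrite bc_S.
    apply Rmult_eq_reg_l with (2 * INR n + 2). rewrite H, IHn. field. lra. lra.
Qed.


Lemma isp_lim (a : nat -> R) x l : is_pseries a x l ->
  is_lim_seq (sum_n (fun k => a k * x ^ k)) l.
Proof.
  intros H. apply is_lim_seq_ext with (sum_n (fun k => scal (pow_n x k) (a k))).
  - intros n. apply sum_n_ext. intros k. rewrite pow_n_pow. unfold scal; simpl; unfold mult; simpl. ring.
  - exact H.
Qed.

Lemma sum_n_nonneg_mono (c : nat -> R) n : (forall k, 0 <= c k) -> sum_n c n <= sum_n c (S n).
Proof. intros H. rewrite sum_Sn. unfold plus; simpl. pose proof (H (S n)). lra. Qed.

Lemma tail_bound (c : nat -> R) (y l : R) N : (forall k, 0 <= c k <= y ^ k) -> 0 <= y < 1 ->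
  is_lim_seq (sum_n c) l -> sum_n c N <= l <= sum_n c N + y ^ (S N) / (1 - y).
Proof.
  intros Hc Hy Hl. split.
  - apply (is_lim_seq_incr_compare (sum_n c) l Hl). intros n. apply sum_n_nonneg_mono. intro k; apply Hc.
  - assert (Hm : forall m, sum_n c (m + N) <= sum_n c N + y ^ (S N) * (1 - y ^ m) / (1 - y)).
    { induction m.
      - simpl. unfold Rdiv. rewrite Rminus_diag, Rmult_0_r, Rmult_0_l. lra.
      - replace (S m + N)%nat with (S (m + N)) by lia. rewrite sum_Sn. unfold plus; simpl.
        destruct (Hc (S (m + N))) as [_ H].
        replace (y ^ S (m + N)) with (y ^ S N * y ^ m) in H
          by (rewrite <- pow_add; f_equal; lia).
        apply Rle_trans with (sum_n c N + y ^ S N * (1 - y ^ m) / (1 - y) + y ^ S N * y ^ m).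
        lra. right. simpl. field. lra. }
    assert (Hl' := proj1 (is_lim_seq_incr_n (sum_n c) N l) Hl).
    assert (Hb : forall m, sum_n c (m + N) <= sum_n c N + y ^ S N / (1 - y)).
    { intros m. eapply Rle_trans. apply Hm. apply Rplus_le_compat_l.
      unfold Rdiv. apply Rmult_le_compat_r. left; apply Rinv_0_lt_compat; lra.
      pose proof (pow_le y m (proj1 Hy)). pose proof (pow_le y (S N) (proj1 Hy)).
      assert (0 <= y ^ S N * y ^ m) by (apply Rmult_le_pos; auto). nra. }
    exact (is_lim_seq_le _ _ _ _ Hb Hl' (is_lim_seq_const _)).
Qed.

Lemma sin2_le1 t : 0 <= sin t ^ 2 <= 1.
Proof. pose proof (sin2_cos2 t). unfold Rsqr in H. simpl. nra. Qed.

Lemma Pint y N : is_RInt (fun t => sum_n (fun k => bc k * (y * sin t ^ 2) ^ k) N) 0 (PI / 2)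
    (PI / 2 * sum_n (fun k => ac k * y ^ k) N).
Proof.
  assert (Ht : forall k, is_RInt (fun t => bc k * (y * sin t ^ 2) ^ k) 0 (PI / 2)
                  (PI / 2 * (ac k * y ^ k))).
  { intros k.
    assert (H1 := (RInt_correct (V:=R_CompleteNormedModule)) _ _ _ (ex_RInt_sinpow (2 * k) 0 (PI / 2))).
    assert (H2 := (is_RInt_scal (V:=R_CompleteNormedModule)) _ _ _ (bc k * y ^ k) _ H1).
    fold (W k) in H2. rewrite W_val in H2.
    apply (is_RInt_ext (V:=R_CompleteNormedModule)) with (f := fun t => scal (bc k * y ^ k) (sin t ^ (2 * k))).
    - intros t _.
      rewrite Rpow_mult_distr, pow_mult, scalR. Rgoal. ring.
    - replace (PI / 2 * (ac k * y ^ k)) with (scal (bc k * y ^ k) (PI / 2 * bc k)). exact H2.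
      unfold scal; simpl; unfold mult; simpl. unfold ac. Rgoal. ring. }
  induction N.
  - apply (is_RInt_ext (V:=R_CompleteNormedModule)) with (f := fun t => bc 0 * (y * sin t ^ 2) ^ 0).
    intros; rewrite sum_O; reflexivity.
    rewrite sum_O. apply Ht.
  - apply (is_RInt_ext (V:=R_CompleteNormedModule)) with
      (f := fun t => plus (sum_n (fun k => bc k * (y * sin t ^ 2) ^ k) N) (bc (S N) * (y * sin t ^ 2) ^ (S N))).
    intros; rewrite sum_Sn; reflexivity.
    rewrite sum_Sn.
    replace (PI / 2 * plus (sum_n (fun k : nat => ac k * y ^ k) N) (ac (S N) * y ^ S N)) with
      (plus (PI / 2 * sum_n (fun k : nat => ac k * y ^ k) N) (PI / 2 * (ac (S N) * y ^ S N))).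
    apply (is_RInt_plus (V:=R_CompleteNormedModule)). exact IHN. apply Ht.
    unfold plus; simpl. Rgoal. ring.
Qed.

Lemma K_series y : 0 <= y < 1 -> K y = PI / 2 * PSeries ac y.
Proof.
  intros Hy.
  set (f := fun t => / sqrt (1 - y * sin t ^ 2)).
  assert (HK : K y = RInt f 0 (PI / 2)).
  { unfold K, calK. apply (RInt_ext (V:=R_CompleteNormedModule)). intros t _.
    unfold f. rewrite pow2_sqrt by lra. reflexivity. }
  assert (Hx : forall t, 0 <= y * sin t ^ 2 <= y).
  { intros t. pose proof (sin2_le1 t). split. apply Rmult_le_pos; lra. nra. }
  set (P := fun N t => sum_n (fun k => bc k * (y * sin t ^ 2) ^ k) N).
  assert (Hb : forall N t, P N t <= f t <= P N t + y ^ (S N) / (1 - y)).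
  { intros N t. unfold f, P.
    assert (Hxt : Rabs (y * sin t ^ 2) < 1) by (pose proof (Hx t); rewrite Rabs_pos_eq; lra).
    rewrite inv_sqrt_series by exact Hxt.
    apply tail_bound. 2: exact Hy.
    - intros k. pose proof (bc_pos k). pose proof (bc_le1 k).
      pose proof (pow_le _ k (proj1 (Hx t))).
      assert ((y * sin t ^ 2) ^ k <= y ^ k) by (apply pow_incr; apply Hx).
      split. apply Rmult_le_pos; lra. nra.
    - apply isp_lim. apply isp_PS. apply bc_abs. exact Hxt. }
  assert (Hf : ex_RInt f 0 (PI / 2)).
  { apply (ex_RInt_continuous (V:=R_CompleteNormedModule)). intros t _.
    apply (ex_derive_continuous (K:=R_AbsRing) (V:=R_NormedModule)). unfold f.
    pose proof (Hx t).
    auto_derive. split. lra. split. apply Rgt_not_eq. apply sqrt_lt_R0. lra. auto. }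
  set (u := fun N => PI / 2 * sum_n (fun k => ac k * y ^ k) N).
  assert (HPI : 0 < PI / 2) by (pose proof PI_RGT_0; lra).
  assert (Hu1 : forall N, u N <= RInt f 0 (PI / 2)).
  { intros N. unfold u. rewrite <- ((is_RInt_unique (V:=R_CompleteNormedModule)) _ _ _ _ (Pint y N)).
    apply RInt_le. lra. eexists; apply Pint. exact Hf. intros t _. apply Hb. }
  assert (Hu2 : forall N, RInt f 0 (PI / 2) <= u N + PI / 2 * (y ^ S N / (1 - y))).
  { intros N.
    assert (Hc := (is_RInt_plus (V:=R_CompleteNormedModule)) _ _ _ _ _ _ (Pint y N)
                     ((is_RInt_const (V:=R_CompleteNormedModule)) 0 (PI / 2) (y ^ S N / (1 - y)))).
    assert (E := (is_RInt_unique (V:=R_CompleteNormedModule)) _ _ _ _ Hc).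
    assert (E' : RInt (fun t => P N t + y ^ S N / (1 - y)) 0 (PI / 2) =
                 u N + (PI / 2 - 0) * (y ^ S N / (1 - y))) by exact E.
    rewrite Rminus_0_r in E'. rewrite <- E'.
    apply RInt_le. lra. exact Hf. eexists; exact Hc.
    intros t _. apply Hb. }
  assert (Hlim : is_lim_seq u (PI / 2 * PSeries ac y)).
  { apply (is_lim_seq_scal_l _ (PI / 2) (PSeries ac y)).
    apply isp_lim. apply isp_PS. apply ac_abs. rewrite Rabs_pos_eq; lra. }
  assert (Hg : is_lim_seq (fun N => PI / 2 * (y ^ S N / (1 - y))) 0).
  { replace 0 with (PI / 2 * (0 * / (1 - y))) by ring.
    apply (is_lim_seq_scal_l _ (PI / 2) (0 * / (1 - y))).
    apply is_lim_seq_ext with (fun N => y ^ S N * / (1 - y)). intros; reflexivity.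
    apply (is_lim_seq_scal_r _ (/ (1 - y)) 0).
    apply (is_lim_seq_incr_1 (fun n => y ^ n) 0). apply is_lim_seq_geom. rewrite Rabs_pos_eq; lra. }
  assert (L1 := is_lim_seq_le _ _ _ _ Hu1 Hlim (is_lim_seq_const _)).
  assert (L2 := is_lim_seq_le _ _ _ _ Hu2 (is_lim_seq_const _) (is_lim_seq_plus' _ _ _ _ Hlim Hg)).
  simpl in L1, L2. rewrite HK. lra.
Qed.


Definition S0 y := PSeries ac y.
Definition S1 y := PSeries (PS_derive ac) y.
Definition S2 y := PSeries (PS_derive (PS_derive ac)) y.

Lemma rad0 y : Rabs y < 1 -> Rbar_lt (Rabs y) (CV_radius ac).
Proof. intros; apply in_rad; auto. apply ac_abs. Qed.
Lemma rad1 y : Rabs y < 1 -> Rbar_lt (Rabs y) (CV_radius (PS_derive ac)).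
Proof. intros; rewrite CV_radius_derive; apply rad0; auto. Qed.
Lemma rad2 y : Rabs y < 1 -> Rbar_lt (Rabs y) (CV_radius (PS_derive (PS_derive ac))).
Proof. intros; rewrite CV_radius_derive; apply rad1; auto. Qed.

Lemma dS0 y : Rabs y < 1 -> is_derive S0 y (S1 y).
Proof. intros; apply is_derive_PSeries, rad0; auto. Qed.
Lemma dS1 y : Rabs y < 1 -> is_derive S1 y (S2 y).
Proof. intros; apply is_derive_PSeries, rad1; auto. Qed.

Lemma dRp q y : y < 1 -> is_derive (fun y => Rpower (1 - y) q) y (- (q * Rpower (1 - y) (q - 1))).
Proof.
  intros Hy.
  assert (H1 : is_derive (fun x => Rpower x q) (1 - y) (q * Rpower (1 - y) (q - 1))).
  { apply is_derive_Reals. apply derivable_pt_lim_power. lra. }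
  assert (H2 : is_derive (fun y : R => 1 - y) y (-1)).
  { auto_derive. auto. ring. }
  assert (H := is_derive_comp _ _ _ _ _ H1 H2).
  eapply is_derive_val. exact H. rewrite scalR. Rgoal. ring.
Qed.

Lemma Rp_shift x q : 0 < x -> Rpower x (q + 1) = Rpower x q * x.
Proof. intros Hx. rewrite Rpower_plus, Rpower_1 by auto. reflexivity. Qed.

Section Phi.
Variable p : R.

Definition Phi y := Rpower (1 - y) p * S0 y.
Definition D1 y := Rpower (1 - y) p * S1 y - p * Rpower (1 - y) (p - 1) * S0 y.
Definition T y := p * (p - 1) * S0 y - 2 * p * (1 - y) * S1 y + (1 - y) ^ 2 * S2 y.
Definition D2 y := Rpower (1 - y) (p - 2) * T y.

Lemma dPhi y : Rabs y < 1 -> is_derive Phi y (D1 y).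
Proof.
  intros Hy. assert (Hy' := Rabs_def2 _ _ Hy).
  assert (H := is_derive_mult _ _ _ _ _ (dRp p y ltac:(lra)) (dS0 y Hy) Rmult_comm).
  eapply is_derive_val. exact H. unfold D1. simpl. unfold plus, mult; simpl. Rgoal. ring.
Qed.

Lemma dD1 y : Rabs y < 1 -> is_derive D1 y (D2 y).
Proof.
  intros Hy. assert (Hy' := Rabs_def2 _ _ Hy).
  assert (Ha := is_derive_mult _ _ _ _ _ (dRp p y ltac:(lra)) (dS1 y Hy) Rmult_comm).
  assert (Hb0 := is_derive_scal _ _ p _ (dRp (p - 1) y ltac:(lra))).
  assert (Hb := is_derive_mult _ _ _ _ _ Hb0 (dS0 y Hy) Rmult_comm).
  assert (H := is_derive_minus _ _ _ _ _ Ha Hb).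
  eapply is_derive_val. exact H.
  unfold D2, T. simpl. unfold minus, plus, opp, mult; simpl.
  assert (E1 : Rpower (1 - y) (p - 1) = Rpower (1 - y) (p - 2) * (1 - y)).
  { rewrite <- Rp_shift by lra. f_equal. ring. }
  assert (E0 : Rpower (1 - y) p = Rpower (1 - y) (p - 2) * (1 - y) ^ 2).
  { replace p with ((p - 2) + 1 + 1) at 1 by ring. rewrite !Rp_shift by lra. ring. }
  replace (p - 1 - 1) with (p - 2) by ring. rewrite E1, E0. Rgoal. ring.
Qed.

End Phi.

Definition qc (p : R) (n : nat) : R :=
  p ^ 2 - p * (2 * INR n + 3) / (2 * INR n + 2) + 9 / (16 * (INR n + 1) * (INR n + 2)).

Lemma isp_val (a : nat -> R) x l l' : is_pseries a x l -> l = l' -> is_pseries a x l'.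
Proof. intros H <-; exact H. Qed.

Lemma T_series p y : Rabs y < 1 -> is_pseries (fun n => ac n * qc p n) y (T p y).
Proof.
  intros Hy.
  assert (H0 : is_pseries ac y (S0 y)) by (apply PSeries_correct, CV_radius_inside, rad0; auto).
  assert (H1 : is_pseries (PS_derive ac) y (S1 y)) by (apply PSeries_correct, CV_radius_inside, rad1; auto).
  assert (H2 : is_pseries (PS_derive (PS_derive ac)) y (S2 y)) by (apply PSeries_correct, CV_radius_inside, rad2; auto).
  assert (H1i := isp_incr _ _ _ H1).
  assert (H2i := isp_incr _ _ _ H2).
  assert (H2ii := isp_incr _ _ _ H2i).
  assert (HA := isp_lin _ _ _ _ _ (p * (p - 1)) (-2 * p) H0 H1).
  assert (HB := isp_lin _ _ _ _ _ 1 (2 * p) HA H1i).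
  assert (HC := isp_lin _ _ _ _ _ 1 1 HB H2).
  assert (HD := isp_lin _ _ _ _ _ 1 (-2) HC H2i).
  assert (HE := isp_lin _ _ _ _ _ 1 1 HD H2ii).
  eapply isp_val. apply is_pseries_ext with (2 := HE).
  2: unfold T; Rgoal; ring.
  - intros n. cbv beta. unfold PS_derive, ac, qc.
    destruct n as [|[|m]]; cbv iota beta.
    + rewrite !bc_S. rewrite !S_INR. simpl (INR 0). simpl (bc 0). Rgoal. field.
    + rewrite !bc_S. rewrite !S_INR. simpl (INR 0). simpl (bc 0). Rgoal. field.
    + rewrite !bc_S. rewrite !S_INR. pose proof (pos_INR m). Rgoal. field. repeat split; lra.
Qed.


Definition Nq p m := 16 * (m + 1) * (m + 2) * p ^ 2 - 8 * (2 * m + 3) * (m + 2) * p + 9.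

Lemma qc_Nq p n : qc p n = Nq p (INR n) / (16 * (INR n + 1) * (INR n + 2)).
Proof. unfold qc, Nq. pose proof (pos_INR n). field. lra. Qed.

Lemma Nq_decomp p m : Nq p m = 16 * (m + 1) * (m + 2) * (p ^ 2 - 3 * p / 2 + 9 / 32) + m * (8 * (m + 2) * p - 9 * (m + 3) / 2).
Proof. unfold Nq. field. Qed.

Lemma sqrt2_facts : sqrt 2 * sqrt 2 = 2 /\ 1.41 < sqrt 2 < 1.42.
Proof.
  assert (H : sqrt 2 * sqrt 2 = 2) by (apply sqrt_sqrt; lra).
  assert (0 <= sqrt 2) by apply sqrt_pos.
  split. exact H. split; nra.
Qed.

Lemma q1_roots p : p ^ 2 - 3 * p / 2 + 9 / 32 = (p - 3 * (2 + sqrt 2) / 8) * (p - 3 * (2 - sqrt 2) / 8).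
Proof. destruct sqrt2_facts as [H _]. nra. Qed.

Lemma Nq_pos p m : 3 * (2 + sqrt 2) / 8 <= p -> 0 <= m -> 0 <= Nq p m /\ (1 <= m -> 0 < Nq p m).
Proof.
  intros Hp Hm. destruct sqrt2_facts as [Hs [Hs1 Hs2]].
  rewrite Nq_decomp, q1_roots.
  assert (A : 0 <= (p - 3 * (2 + sqrt 2) / 8) * (p - 3 * (2 - sqrt 2) / 8)).
  { apply Rmult_le_pos; lra. }
  assert (B : 0 < 8 * (m + 2) * p - 9 * (m + 3) / 2) by nra.
  assert (C : 0 <= 16 * (m + 1) * (m + 2) * ((p - 3 * (2 + sqrt 2) / 8) * (p - 3 * (2 - sqrt 2) / 8))).
  { apply Rmult_le_pos. nra. exact A. }
  split. nra. intros Hm1. nra.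
Qed.

Lemma Nq_neg p m : 3 * (2 - sqrt 2) / 8 <= p <= 1 -> 0 <= m -> Nq p m <= 0 /\ (1 <= m -> Nq p m < 0).
Proof.
  intros Hp Hm. destruct sqrt2_facts as [Hs [Hs1 Hs2]].
  set (p0 := 3 * (2 - sqrt 2) / 8) in *.
  assert (N0 : Nq p0 m = m * (8 * (m + 2) * p0 - 9 * (m + 3) / 2)).
  { rewrite Nq_decomp, q1_roots. fold p0. replace (p0 - p0) with 0 by ring. ring. }
  assert (N1 : Nq 1 m = - 8 * m - 7) by (unfold Nq; ring).
  assert (Hp0 : 0.2 < p0 < 0.23) by (unfold p0; lra).
  assert (B : 8 * (m + 2) * p0 - 9 * (m + 3) / 2 < 0) by nra.
  assert (I : Nq p m * (1 - p0) = (1 - p) * Nq p0 m + (p - p0) * Nq 1 m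
              - 16 * (m + 1) * (m + 2) * (p - p0) * (1 - p) * (1 - p0)).
  { unfold Nq. ring. }
  rewrite N0, N1 in I.
  set (X := m * (8 * (m + 2) * p0 - 9 * (m + 3) / 2)) in *.
  assert (HX : X <= 0) by (unfold X; nra).
  assert (C1 : (1 - p) * X <= 0) by nra.
  assert (C2 : (p - p0) * (- 8 * m - 7) <= 0) by nra.
  assert (C3 : 0 <= 16 * (m + 1) * (m + 2) * (p - p0) * (1 - p) * (1 - p0)).
  { assert (0 <= (p - p0) * (1 - p)) by nra.
    assert (0 <= 16 * (m + 1) * (m + 2)) by nra.
    assert (0 <= 16 * (m + 1) * (m + 2) * ((p - p0) * (1 - p))) by nra. nra. }
  split.
  - assert (Nq p m * (1 - p0) <= 0) by lra. nra.
  - intros Hm1. assert (HX' : X < 0) by (unfold X; nra).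
    assert (C4 : (1 - p) * X + (p - p0) * (- 8 * m - 7) < 0).
    { destruct (Rle_lt_dec 1 p).
      - assert (p = 1) by lra. subst p. nra.
      - assert ((1 - p) * X < 0) by nra. nra. }
    assert (Nq p m * (1 - p0) < 0) by lra. nra.
Qed.

Lemma pos_series (c : nat -> R) y l : (forall n, 0 <= c n) -> 0 < c 1%nat -> 0 < y ->
  is_pseries c y l -> 0 < l.
Proof.
  intros Hc H1 Hy H. apply isp_lim in H.
  assert (Hm : forall n, sum_n (fun k => c k * y ^ k) n <= sum_n (fun k => c k * y ^ k) (S n)).
  { intros n. apply sum_n_nonneg_mono. intros k. apply Rmult_le_pos. auto. apply pow_le; lra. }
  assert (Hle := is_lim_seq_incr_compare _ _ H Hm 1%nat).
  rewrite sum_Sn, sum_O, plusR in Hle. simpl in Hle.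
  pose proof (Hc 0%nat). nra.
Qed.

Lemma qc_sign_pos p n : 3 * (2 + sqrt 2) / 8 <= p -> 0 <= qc p n /\ ((1 <= n)%nat -> 0 < qc p n).
Proof.
  intros Hp. rewrite qc_Nq. pose proof (pos_INR n).
  assert (0 < 16 * (INR n + 1) * (INR n + 2)) by nra.
  destruct (Nq_pos p (INR n) Hp H) as [A B]. split.
  - apply Rdiv_le_0_compat; lra.
  - intros Hn. apply le_INR in Hn. simpl in Hn. apply Rdiv_lt_0_compat; auto.
Qed.

Lemma qc_sign_neg p n : 3 * (2 - sqrt 2) / 8 <= p <= 1 -> qc p n <= 0 /\ ((1 <= n)%nat -> qc p n < 0).
Proof.
  intros Hp. rewrite qc_Nq. pose proof (pos_INR n).
  assert (0 < 16 * (INR n + 1) * (INR n + 2)) by nra.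
  destruct (Nq_neg p (INR n) Hp H) as [A B]. unfold Rdiv. split.
  - assert (0 < / (16 * (INR n + 1) * (INR n + 2))) by (apply Rinv_0_lt_compat; lra). nra.
  - intros Hn. apply le_INR in Hn. simpl in Hn. specialize (B Hn).
    assert (0 < / (16 * (INR n + 1) * (INR n + 2))) by (apply Rinv_0_lt_compat; lra). nra.
Qed.

Lemma T_pos p y : 3 * (2 + sqrt 2) / 8 <= p -> 0 < y < 1 -> 0 < T p y.
Proof.
  intros Hp Hy. apply (pos_series (fun n => ac n * qc p n) y). 
  - intros n. apply Rmult_le_pos. left; apply ac_pos. apply qc_sign_pos; auto.
  - apply Rmult_lt_0_compat. apply ac_pos. apply qc_sign_pos; auto.
  - lra.
  - apply T_series. rewrite Rabs_pos_eq; lra.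
Qed.

Lemma T_neg p y : 3 * (2 - sqrt 2) / 8 <= p <= 1 -> 0 < y < 1 -> T p y < 0.
Proof.
  intros Hp Hy. apply Ropp_lt_cancel. rewrite Ropp_0.
  apply (pos_series (fun n => - (ac n * qc p n)) y).
  - intros n. pose proof (ac_pos n). pose proof (proj1 (qc_sign_neg p n Hp)). nra.
  - pose proof (ac_pos 1). pose proof (proj2 (qc_sign_neg p 1 Hp) (le_n 1)). nra.
  - lra.
  - apply is_pseries_ext with (PS_scal (-1) (fun n => ac n * qc p n)).
    intros n. unfold PS_scal. rewrite scalR. Rgoal. ring.
    replace (- T p y) with (scal (-1) (T p y)) by (rewrite scalR; Rgoal; ring).
    apply (is_pseries_scal (K:=R_AbsRing) (V:=R_NormedModule)). apply Rmult_comm.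
    apply T_series. rewrite Rabs_pos_eq; lra.
Qed.


Lemma Rpower_pos x q : 0 < Rpower x q.
Proof. unfold Rpower. apply exp_pos. Qed.

Lemma abs1 y : 0 < y < 1 -> Rabs y < 1.
Proof. intros; rewrite Rabs_pos_eq; lra. Qed.

Definition p1 := 3 * (2 + sqrt 2) / 8.
Definition p0 := 3 * (2 - sqrt 2) / 8.

Lemma D1_incr p a b : p1 <= p -> 0 < a < b -> b < 1 -> D1 p a < D1 p b.
Proof.
  intros Hp Ha Hb.
  destruct (MVT_gen (D1 p) a b (D2 p)) as [c [Hc E]].
  - intros x Hx. rewrite Rmin_left, Rmax_right in Hx by lra. apply dD1, abs1; lra.
  - intros x Hx. rewrite Rmin_left, Rmax_right in Hx by lra. apply derive_cont_pt with (D2 p x).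
    apply dD1, abs1; lra.
  - rewrite Rmin_left, Rmax_right in Hc by lra.
    assert (0 < D2 p c). { unfold D2. apply Rmult_lt_0_compat. apply Rpower_pos. apply T_pos; auto; lra. }
    nra.
Qed.

Lemma D1_decr p a b : p0 <= p <= 1 -> 0 < a < b -> b < 1 -> D1 p b < D1 p a.
Proof.
  intros Hp Ha Hb.
  destruct (MVT_gen (D1 p) a b (D2 p)) as [c [Hc E]].
  - intros x Hx. rewrite Rmin_left, Rmax_right in Hx by lra. apply dD1, abs1; lra.
  - intros x Hx. rewrite Rmin_left, Rmax_right in Hx by lra. apply derive_cont_pt with (D2 p x).
    apply dD1, abs1; lra.
  - rewrite Rmin_left, Rmax_right in Hc by lra.
    assert (D2 p c < 0). { unfold D2. pose proof (Rpower_pos (1 - c) (p - 2)). pose proof (T_neg p c Hp ltac:(lra)). nra. }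
    nra.
Qed.

Definition Gf p r := Phi p (1 - r) + Phi p r.

Lemma dG p r : 0 < r < 1 -> is_derive (Gf p) r (D1 p r - D1 p (1 - r)).
Proof.
  intros Hr.
  assert (H1 : is_derive (fun r => Phi p (1 - r)) r (scal (-1) (D1 p (1 - r)))).
  { apply (is_derive_comp (Phi p) (fun r => 1 - r)). apply dPhi, abs1; lra. auto_derive; auto; ring. }
  assert (H := is_derive_plus _ _ _ _ _ H1 (dPhi p r (abs1 r Hr))).
  eapply is_derive_val. exact H. rewrite plusR, scalR. Rgoal. ring.
Qed.

Lemma G_sym p r : Gf p (1 - r) = Gf p r.
Proof. unfold Gf. replace (1 - (1 - r)) with r by ring. ring. Qed.

Lemma G_mvt p u v : 0 < u < v -> v < 1 -> exists c, u <= c <= v /\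
   Gf p v - Gf p u = (D1 p c - D1 p (1 - c)) * (v - u).
Proof.
  intros Hu Hv.
  destruct (MVT_gen (Gf p) u v (fun c => D1 p c - D1 p (1 - c))) as [c [Hc E]].
  - intros x Hx. rewrite Rmin_left, Rmax_right in Hx by lra. apply dG; lra.
  - intros x Hx. rewrite Rmin_left, Rmax_right in Hx by lra. eapply derive_cont_pt. apply dG; lra.
  - rewrite Rmin_left, Rmax_right in Hc by lra. exists c. auto.
Qed.

Lemma G_mono1 p u v : p1 <= p -> 0 < u < v -> v <= 1 / 2 ->
  Gf p v <= Gf p u /\ (v < 1 / 2 -> Gf p v < Gf p u).
Proof.
  intros Hp Hu Hv. destruct (G_mvt p u v Hu ltac:(lra)) as [c [Hc E]].
  assert (Hd : forall c, 0 < c < 1 / 2 -> D1 p c - D1 p (1 - c) < 0).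
  { intros c' Hc'. pose proof (D1_incr p c' (1 - c') Hp ltac:(lra) ltac:(lra)). lra. }
  split.
  - destruct (Req_dec c (1 / 2)) as [->|Hne].
    + replace (1 - 1 / 2) with (1 / 2) in E by field. lra.
    + pose proof (Hd c ltac:(lra)). nra.
  - intros Hv'. pose proof (Hd c ltac:(lra)). nra.
Qed.

Lemma G_mono2 p u v : p0 <= p <= 1 -> 0 < u < v -> v <= 1 / 2 ->
  Gf p u <= Gf p v /\ (v < 1 / 2 -> Gf p u < Gf p v).
Proof.
  intros Hp Hu Hv. destruct (G_mvt p u v Hu ltac:(lra)) as [c [Hc E]].
  assert (Hd : forall c, 0 < c < 1 / 2 -> 0 < D1 p c - D1 p (1 - c)).
  { intros c' Hc'. pose proof (D1_decr p c' (1 - c') Hp ltac:(lra) ltac:(lra)). lra. }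
  split.
  - destruct (Req_dec c (1 / 2)) as [->|Hne].
    + replace (1 - 1 / 2) with (1 / 2) in E by field. lra.
    + pose proof (Hd c ltac:(lra)). nra.
  - intros Hv'. pose proof (Hd c ltac:(lra)). nra.
Qed.


Lemma Rpower_1_l q : Rpower 1 q = 1.
Proof. unfold Rpower. rewrite ln_1, Rmult_0_r. apply exp_0. Qed.

Lemma Phi0 p : Phi p 0 = 1.
Proof. unfold Phi, S0. rewrite PSeries_0, Rminus_0_r, Rpower_1_l. unfold ac. simpl. ring. Qed.

Lemma Phi_cont0 p eps : 0 < eps -> exists d, 0 < d /\ forall s, 0 < s < d -> Rabs (Phi p s - 1) < eps.
Proof.
  intros He.
  assert (H := derive_cont_pt _ _ _ (dPhi p 0 ltac:(rewrite Rabs_R0; lra))).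
  unfold continuity_pt, continue_in, limit1_in, limit_in in H.
  destruct (H eps He) as [d [Hd Hx]]. exists d. split. lra.
  intros s Hs. specialize (Hx s). simpl in Hx. unfold R_dist in Hx. rewrite Phi0 in Hx.
  apply Hx. split. split. constructor. lra. rewrite Rminus_0_r, Rabs_pos_eq; lra.
Qed.

Lemma sum_n_le' (a b : nat -> R) n : (forall k, a k <= b k) -> sum_n a n <= sum_n b n.
Proof.
  intros H. induction n. rewrite !sum_O; auto.
  rewrite !sum_Sn, (plusR (sum_n a n)), (plusR (sum_n b n)). pose proof (H (S n)). lra.
Qed.

Lemma S0_ge1 y : 0 <= y < 1 -> 1 <= S0 y.
Proof.
  intros Hy. assert (H := isp_lim _ _ _ (isp_PS ac y ac_abs ltac:(rewrite Rabs_pos_eq; lra))).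
  assert (Hm := is_lim_seq_incr_compare _ _ H).
  assert (Hle : sum_n (fun k => ac k * y ^ k) 0 <= PSeries ac y).
  { apply Hm. intros n. apply sum_n_nonneg_mono. intros k. apply Rmult_le_pos. left; apply ac_pos. apply pow_le; lra. }
  rewrite sum_O in Hle. replace (ac 0 * y ^ 0) with 1 in Hle by (unfold ac; simpl; ring). unfold S0. lra.
Qed.

Lemma S0_le y : 0 <= y < 1 -> S0 y <= / sqrt (1 - y).
Proof.
  intros Hy. assert (Hy' : Rabs y < 1) by (rewrite Rabs_pos_eq; lra).
  rewrite inv_sqrt_series by auto.
  assert (Ha := isp_lim _ _ _ (isp_PS ac y ac_abs Hy')).
  assert (Hb := isp_lim _ _ _ (isp_PS bc y bc_abs Hy')).
  assert (L := is_lim_seq_le _ _ _ _ (fun n => sum_n_le' (fun k => ac k * y ^ k) (fun k => bc k * y ^ k) n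
      (fun k => Rmult_le_compat_r _ _ _ (pow_le _ k (proj1 Hy)) (ac_le_bc k))) Ha Hb).
  exact L.
Qed.

Lemma Phi_end p s : 0 < s < 1 -> Phi p (1 - s) <= Rpower s (p - / 2).
Proof.
  intros Hs. unfold Phi. replace (1 - (1 - s)) with s by ring.
  assert (H := S0_le (1 - s) ltac:(lra)). replace (1 - (1 - s)) with s in H by ring.
  replace (p - / 2) with (p + - (/ 2)) by ring. rewrite Rpower_plus, Rpower_Ropp, Rpower_sqrt by lra.
  apply Rmult_le_compat_l. left; apply Rpower_pos. exact H.
Qed.

Lemma Phi_nonneg p y : 0 <= y < 1 -> 0 <= Phi p y.
Proof. intros. unfold Phi. pose proof (S0_ge1 y H). pose proof (Rpower_pos (1 - y) p). nra. Qed.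

Lemma Rpower_small q e s : 0 < q -> 0 < e -> 0 < s < Rpower e (/ q) -> Rpower s q < e.
Proof.
  intros Hq He Hs. eapply Rlt_le_trans. apply Rlt_Rpower_l. exact Hq. exact Hs.
  rewrite Rpower_mult, Rinv_l, Rpower_1 by lra. lra.
Qed.


Lemma G_half p r : 0 < r < 1 -> exists r', 0 < r' <= 1 / 2 /\ Gf p r = Gf p r'.
Proof.
  intros Hr. destruct (Rle_dec r (1 / 2)).
  - exists r. split. lra. auto.
  - exists (1 - r). split. lra. rewrite G_sym. auto.
Qed.

Lemma G_upper1 p r : p1 <= p -> 0 < r < 1 -> Gf p r < 1.
Proof.
  intros Hp Hr. destruct (G_half p r Hr) as [r' [Hr' ->]].
  set (u := r' / 2). set (v := r' / 4).
  assert (A : Gf p r' <= Gf p u) by (apply (G_mono1 p u r' Hp); unfold u; lra).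
  assert (B : Gf p u < Gf p v) by (apply (G_mono1 p v u Hp); unfold u, v; lra).
  assert (C : Gf p v <= 1).
  { destruct (Rle_dec (Gf p v) 1) as [ok|nok]. exact ok. exfalso.
    set (e := Gf p v - 1).
    assert (He : 0 < e) by (unfold e; lra).
    destruct (Phi_cont0 p (e / 2) ltac:(lra)) as [d [Hd Hc]].
    assert (Hq : 0 < p - / 2) by (unfold p1 in Hp; destruct sqrt2_facts as [_ [? ?]]; lra).
    set (d2 := Rpower (e / 2) (/ (p - / 2))).
    assert (Hd2 : 0 < d2) by apply Rpower_pos.
    set (s := Rmin v (Rmin d d2) / 2).
    assert (Hs : 0 < s) by (unfold s, Rmin; repeat destruct Rle_dec; unfold v; lra).
    assert (Hs1 : s < v /\ s < d /\ s < d2) by (unfold s, Rmin; repeat destruct Rle_dec; unfold v in *; lra).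
    assert (X1 := Hc s ltac:(lra)). apply Rabs_def2 in X1.
    assert (X2 := Phi_end p s ltac:(unfold v in Hs1; lra)).
    assert (X3 := Rpower_small (p - / 2) (e / 2) s Hq ltac:(lra) ltac:(fold d2; lra)).
    assert (X4 := proj1 (G_mono1 p s v Hp ltac:(lra) ltac:(unfold v; lra))).
    unfold Gf in X4. unfold e in *. unfold Gf in *. lra. }
  lra.
Qed.

Lemma G_lower1 p r : p1 <= p -> 0 < r < 1 -> Gf p (1 / 2) <= Gf p r.
Proof.
  intros Hp Hr. destruct (G_half p r Hr) as [r' [Hr' ->]].
  destruct (Req_dec r' (1 / 2)) as [->|Hn]. lra.
  apply (G_mono1 p r' (1 / 2) Hp); lra.
Qed.

Lemma G_lower2 p r : p0 <= p <= 1 -> 0 < r < 1 -> 1 < Gf p r.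
Proof.
  intros Hp Hr. destruct (G_half p r Hr) as [r' [Hr' ->]].
  set (u := r' / 2). set (v := r' / 4).
  assert (A : Gf p u <= Gf p r') by (apply (G_mono2 p u r' Hp); unfold u; lra).
  assert (B : Gf p v < Gf p u) by (apply (G_mono2 p v u Hp); unfold u, v; lra).
  assert (C : 1 <= Gf p v).
  { destruct (Rle_dec 1 (Gf p v)) as [ok|nok]. exact ok. exfalso.
    set (e := 1 - Gf p v).
    assert (He : 0 < e) by (unfold e; lra).
    destruct (Phi_cont0 p e He) as [d [Hd Hc]].
    set (s := Rmin v d / 2).
    assert (Hs : 0 < s) by (unfold s, Rmin; repeat destruct Rle_dec; unfold v; lra).
    assert (Hs1 : s < v /\ s < d) by (unfold s, Rmin; repeat destruct Rle_dec; unfold v in *; lra).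
    assert (X1 := Hc s ltac:(lra)). apply Rabs_def2 in X1.
    assert (X2 := Phi_nonneg p (1 - s) ltac:(unfold v in Hs1; lra)).
    assert (X4 := proj1 (G_mono2 p s v Hp ltac:(lra) ltac:(unfold v; lra))).
    unfold e in *. unfold Gf in *. lra. }
  lra.
Qed.

Lemma G_upper2 p r : p0 <= p <= 1 -> 0 < r < 1 -> Gf p r <= Gf p (1 / 2).
Proof.
  intros Hp Hr. destruct (G_half p r Hr) as [r' [Hr' ->]].
  destruct (Req_dec r' (1 / 2)) as [->|Hn]. lra.
  apply (G_mono2 p r' (1 / 2) Hp); lra.
Qed.

Lemma Fp_eq p r : 0 < r < 1 -> Fp p r = PI / 2 * Gf p r.
Proof.
  intros Hr. unfold Fp, Gf, Phi. rewrite !K_series by lra.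
  replace (1 - (1 - r)) with r by ring. unfold S0. ring.
Qed.

Lemma K12 p : K (1 / 2) / Rpower 2 (p - 1) = PI / 2 * Gf p (1 / 2).
Proof.
  rewrite K_series by lra. unfold Gf, Phi, S0.
  replace (1 - 1 / 2) with (1 / 2) by field.
  assert (E1 : Rpower (1 / 2) p = / Rpower 2 p).
  { unfold Rpower. rewrite <- exp_Ropp. f_equal. replace (1 / 2) with (/ 2) by field.
    rewrite ln_Rinv by lra. ring. }
  assert (E2 : Rpower 2 (p - 1) = Rpower 2 p / 2).
  { replace (p - 1) with (p + - (1)) by ring. rewrite Rpower_plus, Rpower_Ropp, Rpower_1 by lra. field. }
  assert (E0 : Rpower (1 - 1 / 2) p = / Rpower 2 p).
  { rewrite <- E1. f_equal. field. }
  rewrite ?E0, ?E1, E2. pose proof (Rpower_pos 2 p). field. lra.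
Qed.


Theorem mainTheorem13 (p : R) :
  (3 * (2 + sqrt 2) / 8 <= p ->
     forall r : R, 0 < r < 1 ->
       K (1 / 2) / Rpower 2 (p - 1) <= Fp p r /\ Fp p r < PI / 2) /\
  (3 * (2 - sqrt 2) / 8 <= p <= 1 ->
     forall r : R, 0 < r < 1 ->
       PI / 2 < Fp p r /\ Fp p r <= K (1 / 2) / Rpower 2 (p - 1)).
Proof.
  pose proof PI_RGT_0. split.
  - intros Hp r Hr. rewrite Fp_eq, K12 by auto. split.
    + apply Rmult_le_compat_l. lra. apply G_lower1; auto.
    + assert (Gf p r < 1) by (apply G_upper1; auto). nra.
  - intros Hp r Hr. rewrite Fp_eq, K12 by auto. split.
    + assert (1 < Gf p r) by (apply G_lower2; auto). nra.
    + apply Rmult_le_compat_l. lra. apply G_upper2; auto.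
Qed.
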